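(* Let $\{(\iota_1,z_1^* ),\dots,(\iota_J,z_J^* )\}$ be minimally degenerate, let $\vec{\mathfrak c}\in(0,\infty)^J$ be the unique unit positive vector with $\ker A^*=\mathbb{R}\vec{\mathfrak c}$, and assume $$\sum_{i=1}^J|v_i^*|^2>0,\qquad v_i^*:=\sum_{j=1}^J\frac{A^*_{ij}\mathfrak c_i\mathfrak c_j}{|z_i^*-z_j^*|^2}(z_j^*-z_i^* )\in\mathbb{R}^N.$$ Then for any $K_0>0$ and $\delta_1>0$ there exists $\delta_2>0$ such that $$\sum_{i}\lambda_i^{2D-2}(A[\vec z]\vec\lambda^D)_i^2+\sum_i\lambda_i^{2D}\Big|\sum_j\frac{A[\vec z]_{ij}\lambda_j^D(z_i-z_j)}{|z_i-z_j|^2}\Big|^2\simeq_{K_0,\delta_1}\lambda_{\max}^{2D-2}|A[\vec z]\vec\lambda^D|^2+\lambda_{\max}^{4D}$$ for all $\vec\lambda\in(0,\infty)^J$ and $\vec z\in(\mathbb{R}^N)^J$ with $\lambda_{\max}\le K_0$, $\lambda_{\mathrm{max2}}\ge\delta_1\lambda_{\max}$ and $|\vec z-\vec z^*|<\delta_2$.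
   Context: $N\ge7$, $D=\frac{N-2}2$; $\iota_i\in\{\pm1\}$, distinct $z_i^*\in\mathbb{R}^N$. For $\vec z=(z_1,\dots,z_J)$, $A[\vec z]_{ij}=\mathbf 1_{i\ne j}\kappa_0\kappa_\infty\frac{\iota_i\iota_j}{|z_i-z_j|^{N-2}}$ (fixed positive constants $\kappa_0,\kappa_\infty$) and $A^*=A[\vec z^*]$. Minimally degenerate: $A^*$ has a nonzero kernel element in $[0,\infty)^J$ but for every proper subset $\mathcal I$ with $|\mathcal I|\ge2$ the submatrix $A^*_{\mathcal I}$ has none in $[0,\infty)^{\mathcal I}$. $\vec\lambda^D=(\lambda_i^D)_i$, $\lambda_{\max}$, $\lambda_{\mathrm{max2}}$ largest and second largest $\lambda_i$; terms with $i=j$ vanish since $A[\vec z]_{ii}=0$. *)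

(* Defs.v *)
From HB Require Import structures.
From mathcomp Require Import all_boot all_order all_algebra.
From mathcomp Require Import reals exp.
Set Implicit Arguments. Unset Strict Implicit. Unset Printing Implicit Defensive.
Import Order.TTheory GRing.Theory Num.Theory.
Local Open Scope ring_scope.

Section Defs.
Variables (R : realType) (N J : nat).

Definition pt := 'I_N -> R.

Definition vnorm2 (x : pt) : R := \sum_(k < N) x k ^+ 2.
Definition vnorm (x : pt) : R := Num.sqrt (vnorm2 x).
Definition vsub (x y : pt) : pt := fun k => x k - y k.

Definition Dexp : R := (N%:R - 2) / 2.

Definition Amat (k0 kinf : R) (iota : 'I_J -> R) (z : 'I_J -> pt)
  (i j : 'I_J) : R :=
  if i == j then 0
  else k0 * kinf * iota i * iota j / (vnorm (vsub (z i) (z j))) ^+ (N - 2).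

Definition mulAv (A : 'I_J -> 'I_J -> R) (x : 'I_J -> R) (i : 'I_J) : R :=
  \sum_(j < J) A i j * x j.

Definition jnorm2 (x : 'I_J -> R) : R := \sum_(i < J) x i ^+ 2.

Definition cfg_dist (z z' : 'I_J -> pt) : R :=
  Num.sqrt (\sum_(i < J) vnorm2 (vsub (z i) (z' i))).

(* Nonzero kernel element in [0,oo)^I of the principal submatrix A_I,
   vectors on I represented as functions on 'I_J vanishing off I. *)
Definition has_nonneg_kernel (A : 'I_J -> 'I_J -> R) (I : {set 'I_J}) : Prop :=
  exists x : 'I_J -> R,
    [/\ forall j, 0 <= x j,
        forall j, j \notin I -> x j = 0,
        exists2 j, j \in I & x j != 0 &
        forall i, i \in I -> \sum_(j in I) A i j * x j = 0].

Definition minimally_degenerate (A : 'I_J -> 'I_J -> R) : Prop :=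
  has_nonneg_kernel A [set: 'I_J] /\
  forall I : {set 'I_J}, I \proper [set: 'I_J] -> (2 <= #|I|)%N ->
    ~ has_nonneg_kernel A I.

(* lambda_max and second largest lambda (order statistic, ties counted):
   lambda_max2 = max over pairs i <> j of min(lambda_i, lambda_j). *)
Definition lmax (l : 'I_J -> R) : R := \big[Num.max/0]_(i < J) l i.
Definition lmax2 (l : 'I_J -> R) : R :=
  \big[Num.max/0]_(i < J) \big[Num.max/0]_(j < J | j != i) Num.min (l i) (l j).

Definition lpow (l : 'I_J -> R) (a : R) : 'I_J -> R := fun i => powR (l i) a.

End Defs.

(* Main.v *)
Require Import Defs.
From HB Require Import structures.
From mathcomp Require Import all_boot all_order all_algebra.
From mathcomp Require Import ring lra.
From mathcomp Require Import boolp classical_sets functions reals topology normedtype realfun exp.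
Set Implicit Arguments. Unset Strict Implicit. Unset Printing Implicit Defensive.
Import Order.TTheory GRing.Theory Num.Theory.
Import numFieldNormedType.Exports.
Local Open Scope classical_set_scope.
Local Open Scope ring_scope.

Section cvglib.
Context {R : realType} {T : Type} (F : set_system T) {FF : Filter F}.

Lemma cvg_bigsum (I : Type) (r : seq I) (P : pred I) (f : I -> T -> R) (a : I -> R) :
  (forall i, P i -> f i @ F --> a i) ->
  (fun t => \sum_(i <- r | P i) f i t) @ F --> \sum_(i <- r | P i) a i.
Proof.
move=> H; elim: r => [|i r IH].
  under eq_fun do rewrite big_nil; rewrite big_nil; exact: cvg_cst.
under eq_fun do rewrite big_cons; rewrite big_cons.
case Pi: (P i) => //.
by apply: cvgD => //; exact: H.
Qed.

Lemma cvg_expn (f : T -> R) (a : R) n : f @ F --> a -> (fun t => f t ^+ n) @ F --> a ^+ n.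
Proof.
move=> H; elim: n => [|n IH].
  under eq_fun do rewrite expr0; rewrite expr0; exact: cvg_cst.
under eq_fun do rewrite exprS; rewrite exprS.
exact: cvgM.
Qed.
End cvglib.

Section ZC.
Variables (R : realType) (N J : nat) (zs : 'I_J -> pt R N).

Definition Fz : set_system ('I_J -> pt R N) :=
  filter_from [set d : R | 0 < d] (fun d => [set z | cfg_dist z zs < d]).

Lemma cfg_dist_refl : cfg_dist zs zs = 0.
Proof.
rewrite /cfg_dist big1 ?sqrtr0 // => i _.
by rewrite /vnorm2 big1 // => k _; rewrite /vsub subrr expr0n.
Qed.

Global Instance Fz_filter : ProperFilter Fz.
Proof.
apply: filter_from_proper.
  apply: filter_from_filter; first by exists 1 => /=; exact: ltr01.
  move=> a b /= Ha Hb; exists (Num.min a b); first by rewrite /= lt_min Ha Hb.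
  by move=> z /=; rewrite lt_min => /andP[].
by move=> d /= Hd; exists zs => /=; rewrite cfg_dist_refl.
Qed.

Lemma coord_le z i k : `|z i k - zs i k| <= cfg_dist z zs.
Proof.
rewrite /cfg_dist -sqrtr_sqr ler_sqrt; last first.
  by apply: sumr_ge0 => i' _; apply: sumr_ge0 => k' _; exact: sqr_ge0.
rewrite (bigD1 i) //= /vnorm2 (bigD1 k) //= /vsub -addrA lerDl.
apply: addr_ge0; first by apply: sumr_ge0 => k' _; exact: sqr_ge0.
by apply: sumr_ge0 => i' _; apply: sumr_ge0 => k' _; exact: sqr_ge0.
Qed.

Lemma cvg_coord i k : (fun z : 'I_J -> pt R N => z i k) @ Fz --> zs i k.
Proof.
apply/cvgrPdist_lt => e e0; exists e => // z /= Hz.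
by rewrite distrC; exact: le_lt_trans (coord_le z i k) Hz.
Qed.

Lemma cvg_vnorm2 i j : (fun z : 'I_J -> pt R N => vnorm2 (vsub (z i) (z j))) @ Fz
   --> vnorm2 (vsub (zs i) (zs j)).
Proof.
rewrite /vnorm2 /vsub; apply: cvg_bigsum => k _; apply: cvg_expn.
by apply: cvgB; exact: cvg_coord.
Qed.

Hypothesis zs_dist : forall i j, i != j -> zs i <> zs j.

Lemma vnorm2_pos i j : i != j -> 0 < vnorm2 (vsub (zs i) (zs j)).
Proof.
move=> ij; rewrite lt_def; apply/andP; split; last first.
  by apply: sumr_ge0 => k _; exact: sqr_ge0.
apply/negP => /eqP/psumr_eq0P H; apply: (zs_dist ij); apply/funext => k.
have := H (fun k _ => sqr_ge0 _) k isT; rewrite /vsub => /eqP; rewrite sqrf_eq0 subr_eq0.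
by move/eqP.
Qed.

Variables (k0 kinf : R) (iota : 'I_J -> R).

Definition bF (z : 'I_J -> pt R N) i j k :=
  Amat k0 kinf iota z i j * (z i k - z j k) / vnorm2 (vsub (z i) (z j)).

Lemma cvg_Amat i j : (fun z => Amat k0 kinf iota z i j) @ Fz --> Amat k0 kinf iota zs i j.
Proof.
rewrite /Amat; case: eqP => [_|/eqP ne]; first exact: cvg_cst.
apply: cvgMl_tmp; apply: cvgV.
  by rewrite expf_eq0 negb_and; apply/orP; right; rewrite /vnorm sqrtr_eq0 -ltNge vnorm2_pos.
apply: cvg_expn; rewrite /vnorm.
apply: (continuous_cvg _ (@sqrt_continuous R _)).
exact: cvg_vnorm2.
Qed.

Lemma cvg_bF i j k : (fun z => bF z i j k) @ Fz --> bF zs i j k.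
Proof.
rewrite /bF; case: (eqVneq i j) => [<-|ne].
  under eq_fun do rewrite /Amat eqxx !mul0r.
  rewrite /Amat eqxx !mul0r; exact: cvg_cst.
apply: cvgM; last by apply: cvgV; [rewrite gt_eqF // vnorm2_pos | exact: cvg_vnorm2].
by apply: cvgM; [exact: cvg_Amat | apply: cvgB; exact: cvg_coord].
Qed.

End ZC.

Section Compact.
Variable R : realType.
Definition Kset (n : nat) : set 'rV[R]_n :=
  [set v | forall i, `[0, 1]%classic (v ord0 i)] `&` [set v | 1 <= \sum_i v ord0 i].
Arguments Kset : clear implicits.

Lemma KsetP n v : Kset n v <-> (forall i, 0 <= v ord0 i <= 1) /\ 1 <= \sum_i v ord0 i.
Proof.
rewrite /Kset /=; split => -[H1 H2]; split => // i; have := H1 i;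
  by rewrite /= in_itv.
Qed.

Lemma Kset_compact (n : nat) : compact (Kset n).
Proof.
apply: compact_closedI.
  have := @rV_compact R n (fun=> `[0, 1]%classic).
  apply => _; exact: segment_compact.
apply: (@preimage_closed _ _ (fun v : 'rV[R]_n => \sum_i v ord0 i) [set x | 1 <= x]).
  move=> v _; apply: (@cvg_bigsum R _ (nbhs v) _) => i _; exact: coord_continuous.
exact: closed_ge.
Qed.

Lemma lb_compact (n : nat) (f : 'rV[R]_n -> R) : continuous f ->
  (forall v, Kset n v -> 0 < f v) ->
  exists2 e, 0 < e & forall v, Kset n v -> e <= f v.
Proof.
move=> fc fpos.
have cK : compact (f @` Kset n).
  apply: continuous_compact; last exact: Kset_compact.
  exact: continuous_subspaceT.
have clK : closed (f @` Kset n) by apply: compact_closed => //; exact: norm_hausdorff.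
have : open (~` (f @` Kset n)) by rewrite openC.
rewrite openE => /(_ 0) /=.
have n0 : ~ (f @` Kset n) 0.
  by move=> [v Kv fv0]; have := fpos v Kv; rewrite fv0 ltxx.
move=> /(_ n0) /nbhs_ballP [e e0 He].
exists e => // v Kv; rewrite leNgt; apply/negP => fve.
apply: (He (f v)); last by exists v.
rewrite /ball /= sub0r normrN gtr0_norm //; exact: fpos.
Qed.

End Compact.
Arguments Kset : clear implicits.

Section Helpers.
Variable R : realType.

Lemma fin_unif (I : finType) (Q : I -> R -> Prop) :
  (forall i, exists2 e, 0 < e & Q i e) ->
  (forall i e e', 0 < e' -> e' <= e -> Q i e -> Q i e') ->
  exists2 e, 0 < e & forall i, Q i e.
Proof.
move=> H Hm.
suff [e e0 He] : exists2 e, 0 < e & forall i, i \in enum I -> Q i e.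
  by exists e => // i; apply: He; rewrite mem_enum.
elim: (enum I) => [|a s [e e0 He]]; first by exists 1.
have [ea ea0 Ha] := H a.
exists (Num.min e ea); first by rewrite lt_min e0 ea0.
move=> i; rewrite inE => /orP[/eqP->|ins].
  by apply: Hm Ha; rewrite ?lt_min ?e0 ?ea0 // ge_min lexx orbT.
by apply: Hm (He i ins); rewrite ?lt_min ?e0 ?ea0 // ge_min lexx.
Qed.

Lemma sq_pert (u v E : R) : `|u - v| <= E -> v^+2 <= 2 * u ^+2 + 2 * E^+2.
Proof.
rewrite ler_norml => /andP[H1 H2].
have h1 : 0 <= (E - (u - v)) * (E + (u - v)) by apply: mulr_ge0; lra.
have h2 : 0 <= (u + (u - v))^+2 by exact: sqr_ge0.
nra.
Qed.

Lemma sum_pert (I : finType) (P : pred I) (u v : I -> R) (E : R) :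
  (forall i, P i -> `|u i - v i| <= E) ->
  \sum_(i | P i) v i ^+ 2 <= 2 * \sum_(i | P i) u i ^+ 2 + 2 * (#|I|%:R * E ^+ 2).
Proof.
move=> H.
apply: (@le_trans _ _ (\sum_(i | P i) (2 * u i ^+ 2 + 2 * E ^+ 2))).
  by apply: ler_sum => i Pi; apply: sq_pert; exact: H.
rewrite big_split /= mulr_sumr lerD2l.
apply: (@le_trans _ _ (\sum_(i : I) 2 * E ^+ 2)).
  by rewrite [X in X <= _]big_mkcond /=; apply: ler_sum => i _; case: (P i) => //;
    apply: mulr_ge0 => //; exact: sqr_ge0.
by rewrite sumr_const -[_ *+ #|_|]mulr_natl mulrCA.
Qed.

Lemma norm_sum_le (n : nat) (f : 'I_n -> R) (B : R) :
  (forall j, `|f j| <= B) -> `|\sum_j f j| <= n%:R * B.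
Proof.
move=> H; apply: le_trans (ler_norm_sum _ _ _) _.
apply: (@le_trans _ _ (\sum_(j < n) B)); first by apply: ler_sum => j _; exact: H.
by rewrite sumr_const card_ord mulr_natl.
Qed.

Lemma term_le_sum (I : finType) (F : I -> R) i :
  (forall j, 0 <= F j) -> F i <= \sum_j F j.
Proof.
move=> H; rewrite (bigD1 i) //= lerDl; apply: sumr_ge0 => j _; exact: H.
Qed.

Lemma sum_SB (J : nat) (G H : 'I_J -> R) (c : R) :
  (forall i, G i <= 2 * H i + 2 * c) -> \sum_i G i <= 2 * \sum_i H i + 2 * (J%:R * c).
Proof.
move=> h; apply: le_trans (ler_sum _ (fun i _ => h i)) _.
rewrite big_split /= -mulr_sumr lerD2l -mulr_sumr sumr_const card_ord.
by rewrite -[_ *+ J]mulr_natl.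
Qed.

End Helpers.

Section Model.
Variables (R : realType) (J : nat).

Definition fT (A : 'I_J -> 'I_J -> R) (T : {set 'I_J}) (v : 'rV[R]_J) : R :=
  \sum_(i in T) (\sum_(j in T) A i j * v ord0 j) ^+ 2
  + \sum_(j | j \notin T) (v ord0 j) ^+ 2.

Lemma fT_cvg A T (X : Type) (F : set_system X) (FF : Filter F) (g : X -> 'rV[R]_J) (g0 : 'rV[R]_J) :
  (forall j, (fun t => g t ord0 j) @ F --> g0 ord0 j) ->
  (fun t => fT A T (g t)) @ F --> fT A T g0.
Proof.
move=> H; rewrite /fT; apply: cvgD.
  apply: cvg_bigsum => i _; apply: cvg_expn.
  by apply: cvg_bigsum => j _; apply: cvgMl_tmp.
by apply: cvg_bigsum => j _; apply: cvg_expn.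
Qed.

Lemma fT_cont A T : continuous (fT A T).
Proof.
move=> v; apply: (@fT_cvg A T _ (nbhs v) _ id) => j.
exact: coord_continuous.
Qed.

Lemma fT_pos A (T : {set 'I_J}) : minimally_degenerate A -> T \proper [set: 'I_J]%SET -> (2 <= #|T|)%N ->
  forall v, Kset R J v -> 0 < fT A T v.
Proof.
move=> [_ Hmin] TP T2 v /KsetP [Hb Hs].
have ge1 : 0 <= \sum_(i in T) (\sum_(j in T) A i j * v ord0 j) ^+ 2.
  by apply: sumr_ge0 => i _; exact: sqr_ge0.
have ge2 : 0 <= \sum_(j | j \notin T) (v ord0 j) ^+ 2.
  by apply: sumr_ge0 => i _; exact: sqr_ge0.
rewrite lt_def addr_ge0 // andbT; apply/negP; rewrite paddr_eq0 //.
move=> /andP[/eqP H1 /eqP H2]. apply: (Hmin T TP T2).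
have H1' := psumr_eq0P (fun i _ => sqr_ge0 _) H1.
have H2' := psumr_eq0P (fun i _ => sqr_ge0 _) H2.
have out j : j \notin T -> v ord0 j = 0.
  by move=> jT; have /eqP := H2' j jT; rewrite sqrf_eq0 => /eqP.
exists (fun j => v ord0 j); split.
- by move=> j; have /andP[] := Hb j.
- exact: out.
- case: (boolP [exists j, (j \in T) && (v ord0 j != 0)]).
    by move=> /existsP [j /andP[jT vj]]; exists j.
  move=> /existsPn Hn; exfalso; move: Hs; rewrite big1 ?ler10 // => j _.
  have := Hn j; rewrite negb_and negbK => /orP[jT|/eqP //]; exact: out.
- by move=> i iT; have /eqP := H1' i iT; rewrite sqrf_eq0 => /eqP.
Qed.

End Model.

Section Model2.
Variables (R : realType) (N J : nat) (k0 kinf : R) (iota : 'I_J -> R)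
  (zs : 'I_J -> pt R N) (c : 'I_J -> R).

Local Notation As := (Amat k0 kinf iota zs).
Local Notation Bs := (bF k0 kinf iota zs).

Definition F0 (K0 : R) (v : 'rV[R]_J) : R :=
  \sum_i (\sum_j As i j * v ord0 j) ^+ 2
  + K0 ^+ 2 * \sum_i \sum_k (\sum_j Bs i j k * v ord0 j) ^+ 2.

Lemma F0_cont K0 : continuous (F0 K0).
Proof.
move=> v.
have H : forall (X : Type) (F : set_system X) (FF : Filter F) (g : X -> 'rV[R]_J) (g0 : 'rV[R]_J),
  (forall j, (fun t => g t ord0 j) @ F --> g0 ord0 j) ->
  (fun t => F0 K0 (g t)) @ F --> F0 K0 g0.
  move=> X F FF g g0 Hg; rewrite /F0; apply: cvgD.
    apply: cvg_bigsum => i _; apply: cvg_expn.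
    by apply: cvg_bigsum => j _; apply: cvgMl_tmp.
  apply: cvgMl_tmp; apply: cvg_bigsum => i _; apply: cvg_bigsum => k _.
  apply: cvg_expn; by apply: cvg_bigsum => j _; apply: cvgMl_tmp.
apply: (@H _ (nbhs v) _ id) => j; exact: coord_continuous.
Qed.

Lemma F0_pos K0 : 0 < K0 ->
  (forall x : 'I_J -> R,
     (forall i, mulAv As x i = 0) <-> exists t : R, forall i, x i = t * c i) ->
  (exists i k, \sum_j Bs i j k * c j != 0) ->
  forall v, Kset R J v -> 0 < F0 K0 v.
Proof.
move=> K0p Hker [i0 [k0' Hbc]] v /KsetP [Hb Hs].
have ge1 : 0 <= \sum_i (\sum_j As i j * v ord0 j) ^+ 2.
  by apply: sumr_ge0 => i _; exact: sqr_ge0.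
have ge2 : 0 <= \sum_i \sum_k (\sum_j Bs i j k * v ord0 j) ^+ 2.
  by apply: sumr_ge0 => i _; apply: sumr_ge0 => k _; exact: sqr_ge0.
have ge2' : 0 <= K0 ^+ 2 * \sum_i \sum_k (\sum_j Bs i j k * v ord0 j) ^+ 2.
  by apply: mulr_ge0 => //; exact: sqr_ge0.
rewrite /F0 lt_def addr_ge0 // andbT; apply/negP; rewrite paddr_eq0 //.
move=> /andP[/eqP H1 /eqP H2].
have H1' := psumr_eq0P (fun i _ => sqr_ge0 _) H1.
have [t Ht] : exists t : R, forall i, v ord0 i = t * c i.
  apply/(Hker (fun j => v ord0 j)) => i; rewrite /mulAv.
  by have /eqP := H1' i isT; rewrite sqrf_eq0 => /eqP.
move: H2 => /eqP; rewrite mulf_eq0 sqrf_eq0 gt_eqF //= => /eqP H2.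
have Hnn : forall i : 'I_J, true -> 0 <= \sum_k (\sum_j Bs i j k * v ord0 j) ^+ 2.
  by move=> i _; apply: sumr_ge0 => k _; exact: sqr_ge0.
have H2' : \sum_k (\sum_j Bs i0 j k * v ord0 j) ^+ 2 = 0.
  by apply: (psumr_eq0P Hnn H2).
have H3 : (\sum_j Bs i0 j k0' * v ord0 j) ^+ 2 = 0.
  by apply: (psumr_eq0P _ H2') => // k _; exact: sqr_ge0.
move: H3 => /eqP; rewrite sqrf_eq0.
under eq_bigr do rewrite Ht mulrCA.
rewrite -mulr_sumr mulf_eq0 (negbTE Hbc) orbF => /eqP t0.
move: Hs; rewrite big1 ?ler10 // => j _; by rewrite Ht t0 mul0r.
Qed.

Lemma bc_nonzero :
  0 < \sum_(i < J) vnorm2 (fun k : 'I_N =>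
        \sum_(j < J) As i j * c i * c j
                     / vnorm2 (vsub (zs i) (zs j)) * (zs j k - zs i k)) ->
  exists i k, \sum_j Bs i j k * c j != 0.
Proof.
move=> Hpos.
case: (boolP [exists i, exists k, \sum_j Bs i j k * c j != 0]).
  by move=> /existsP [i /existsP [k H]]; exists i, k.
move=> /existsPn Hn; exfalso; move: Hpos; rewrite big1 ?ltxx // => i _.
rewrite /vnorm2 big1 // => k _.
have : \sum_j Bs i j k * c j = 0.
  by have /existsPn := Hn i => /(_ k); rewrite negbK => /eqP.
move=> H0.
have -> : \sum_(j < J) As i j * c i * c j / vnorm2 (vsub (zs i) (zs j)) * (zs j k - zs i k)
   = - c i * \sum_j Bs i j k * c j.
  rewrite mulr_sumr; apply: eq_bigr => j _; rewrite /bF; ring.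
by rewrite H0 mulr0 expr0n.
Qed.

Lemma near_all : (forall i j, i != j -> zs i <> zs j) ->
  forall eps, 0 < eps -> exists2 d, 0 < d & forall z, cfg_dist z zs < d ->
  forall i j k, `|Amat k0 kinf iota z i j - As i j| < eps /\
                `|bF k0 kinf iota z i j k - Bs i j k| < eps.
Proof.
move=> zd eps e0.
have H : \forall z \near Fz zs, forall p : 'I_J * 'I_J * 'I_N,
    `|Amat k0 kinf iota z p.1.1 p.1.2 - As p.1.1 p.1.2| < eps /\
    `|bF k0 kinf iota z p.1.1 p.1.2 p.2 - Bs p.1.1 p.1.2 p.2| < eps.
  apply: filter_forall => -[[i j] k] /=.
  apply: filterI.
    by move/cvgrPdistC_lt: (@cvg_Amat _ _ _ zs zd k0 kinf iota i j) => /(_ eps e0).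
  by move/cvgrPdistC_lt: (@cvg_bF _ _ _ zs zd k0 kinf iota i j k) => /(_ eps e0).
case: H => d /= d0 Hd; exists d => // z Hz i j k.
exact: (Hd z Hz (i, j, k)).
Qed.

End Model2.

Section Core.
Variable R : realFieldType.

Lemma le_of_eq (x y : R) : x = y -> x <= y.
Proof. by move=> ->. Qed.

Lemma sq_le_of_norm (u B : R) : `|u| <= B -> u ^+ 2 <= B ^+ 2.
Proof.
rewrite ler_norml => /andP[h1 h2].
have h : 0 <= (B - u) * (B + u) by apply: mulr_ge0; lra.
nra.
Qed.

Lemma sum_sq_PX (n : nat) (P : R) (a : 'I_n -> R) :
  \sum_i (P * a i) ^+ 2 = P ^+ 2 * \sum_i a i ^+ 2.
Proof. by rewrite mulr_sumr; apply: eq_bigr => i _; rewrite exprMn. Qed.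

Lemma core_ub (J N : nat) (q P Bb : R) (s t : 'I_J -> R) (a : 'I_J -> R)
  (b : 'I_J -> 'I_N -> R) :
  0 <= q -> (forall i, 0 <= s i <= q) -> (forall i, 0 <= t i <= P ^+ 2) ->
  (forall i k, `|b i k| <= Bb) ->
  \sum_i s i * (P * a i) ^+ 2 + \sum_i t i * \sum_k (P * b i k) ^+ 2
   <= (1 + J%:R * N%:R * Bb ^+ 2) * (q * \sum_i (P * a i) ^+ 2 + P ^+ 4).
Proof.
move=> q0 Hs Ht Hb.
set X := \sum_i (P * a i) ^+ 2.
have X0 : 0 <= X by apply: sumr_ge0 => i _; exact: sqr_ge0.
have h1 : \sum_i s i * (P * a i) ^+ 2 <= q * X.
  rewrite /X mulr_sumr; apply: ler_sum => i _; apply: ler_wpM2r.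
    exact: sqr_ge0.
  by case/andP: (Hs i).
have h2 : \sum_i t i * \sum_k (P * b i k) ^+ 2 <= J%:R * N%:R * Bb ^+ 2 * P ^+ 4.
  apply: (@le_trans _ _ (\sum_(i < J) (N%:R * Bb ^+ 2 * P ^+ 4))).
    apply: ler_sum => i _.
    have hk : \sum_k (P * b i k) ^+ 2 <= N%:R * (P ^+ 2 * Bb ^+ 2).
      apply: (@le_trans _ _ (\sum_(k < N) (P ^+ 2 * Bb ^+ 2))).
        apply: ler_sum => k _; rewrite exprMn; apply: ler_wpM2l.
          exact: sqr_ge0.
        exact: sq_le_of_norm.
      by rewrite sumr_const card_ord -[_ *+ N]mulr_natl.
    apply: (@le_trans _ _ (P ^+ 2 * (N%:R * (P ^+ 2 * Bb ^+ 2)))).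
      apply: ler_pM => //.
      - by case/andP: (Ht i).
      - by apply: sumr_ge0 => k _; exact: sqr_ge0.
      - by case/andP: (Ht i).
    by apply: le_of_eq; ring.
  by rewrite sumr_const card_ord -[_ *+ J]mulr_natl; apply: le_of_eq; ring.
have W0 : 0 <= J%:R * N%:R * Bb ^+ 2 by rewrite mulr_ge0 ?sqr_ge0 ?mulr_ge0 ?ler0n.
have P4 : 0 <= P ^+ 4 by apply: exprn_even_ge0.
have qX : 0 <= q * X by exact: mulr_ge0.
set W := J%:R * N%:R * Bb ^+ 2 in W0 h2 *.
apply: (@le_trans _ _ (q * X + W * P ^+ 4)); first exact: lerD.
nra.
Qed.


Lemma core_full (J N : nat) (q P M K0 ep ed e : R) (s x a : 'I_J -> R)
  (b : 'I_J -> 'I_N -> R) :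
  0 <= q -> 0 < K0 -> 0 < ep -> 0 < ed -> 0 < e -> 0 <= M -> M <= K0 ->
  q * M ^+ 2 = P ^+ 2 ->
  (forall i, ep * q <= s i) -> (forall i, ed <= x i) ->
  e <= \sum_i a i ^+ 2 + K0 ^+ 2 * \sum_i \sum_k b i k ^+ 2 ->
  q * \sum_i (P * a i) ^+ 2 + P ^+ 4 <= (1 + K0 ^+ 2 / e) * (ep^-1 + (ed ^+ 2)^-1) *
   (\sum_i s i * (P * a i) ^+ 2 + \sum_i (P * x i) ^+ 2 * \sum_k (P * b i k) ^+ 2).
Proof.
move=> q0 K0p ep0 ed0 e0 M0 MK qM Hs Hx He.
set A2 := \sum_i a i ^+ 2.
set B2 := \sum_i \sum_k b i k ^+ 2.
have A20 : 0 <= A2 by apply: sumr_ge0 => i _; exact: sqr_ge0.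
have B20 : 0 <= B2 by apply: sumr_ge0 => i _; apply: sumr_ge0 => k _; exact: sqr_ge0.
have P2 : 0 <= P ^+ 2 by exact: sqr_ge0.
set X := q * (P ^+ 2 * A2).
set Y := P ^+ 4 * B2.
have X0 : 0 <= X by apply: mulr_ge0 => //; exact: mulr_ge0.
have Y0 : 0 <= Y by apply: mulr_ge0 => //; exact: exprn_even_ge0.
have hL1 : ep * X <= \sum_i s i * (P * a i) ^+ 2.
  have -> : ep * X = ep * q * \sum_i (P * a i) ^+ 2 by rewrite sum_sq_PX /X mulrA.
  rewrite mulr_sumr; apply: ler_sum => i _; apply: ler_wpM2r; [exact: sqr_ge0 | exact: Hs].
have hL2 : ed ^+ 2 * Y <= \sum_i (P * x i) ^+ 2 * \sum_k (P * b i k) ^+ 2.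
  rewrite /Y /B2 mulr_sumr mulr_sumr; apply: ler_sum => i _.
  rewrite sum_sq_PX.
  have -> : ed ^+ 2 * (P ^+ 4 * \sum_k b i k ^+ 2) = (P * ed) ^+ 2 * (P ^+ 2 * \sum_k b i k ^+ 2).
    by ring.
  apply: ler_wpM2r; first by rewrite mulr_ge0 // sumr_ge0 // => k _; exact: sqr_ge0.
  rewrite -[X in X <= _]real_normK ?num_real // -[X in _ <= X]real_normK ?num_real //.
  rewrite ler_sqr ?nnegrE // !normrM ler_wpM2l //.
  by rewrite !ger0_norm ?(le_trans (ltW ed0) (Hx i)) // ltW.
have hP4 : e * P ^+ 4 <= K0 ^+ 2 * (X + Y).
  have h1 : e * P ^+ 4 <= P ^+ 4 * A2 + K0 ^+ 2 * Y.
    apply: (@le_trans _ _ ((A2 + K0 ^+ 2 * B2) * P ^+ 4)).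
      by apply: ler_wpM2r => //; exact: exprn_even_ge0.
    by apply: le_of_eq; rewrite /Y; ring.
  apply: le_trans h1 _.
  have h2 : P ^+ 4 * A2 <= K0 ^+ 2 * X.
    have -> : P ^+ 4 * A2 = (q * M ^+ 2) * (P ^+ 2 * A2) by rewrite qM; ring.
    have -> : K0 ^+ 2 * X = (q * K0 ^+ 2) * (P ^+ 2 * A2) by rewrite /X; ring.
    apply: ler_wpM2r; first by rewrite mulr_ge0.
    apply: ler_wpM2l => //; rewrite ler_sqr ?nnegrE //; exact: ltW.
  rewrite mulrDr; exact: lerD.
rewrite sum_sq_PX -/A2.
have hXY : X + Y <= (ep^-1 + (ed ^+ 2)^-1) * (ep * X + ed ^+ 2 * Y).
  have ed2 : 0 < ed ^+ 2 by exact: exprn_gt0.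
  have e1 : X = ep^-1 * (ep * X) by rewrite mulrA mulVf ?gt_eqF // mul1r.
  have e2 : Y = (ed ^+ 2)^-1 * (ed ^+ 2 * Y) by rewrite mulrA mulVf ?gt_eqF // mul1r.
  have ha : 0 <= ep^-1 * (ed ^+ 2 * Y).
    by apply: mulr_ge0; [rewrite invr_ge0 ltW | apply: mulr_ge0 => //; exact: ltW].
  have hb : 0 <= (ed ^+ 2)^-1 * (ep * X).
    by apply: mulr_ge0; [rewrite invr_ge0 ltW | apply: mulr_ge0 => //; exact: ltW].
  rewrite {1}e1 {1}e2 mulrDl !mulrDr; lra.
have hL : ep * X + ed ^+ 2 * Y <= \sum_i s i * (P * a i) ^+ 2 + \sum_i (P * x i) ^+ 2 * \sum_k (P * b i k) ^+ 2.
  exact: lerD.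
have hP4' : P ^+ 4 <= K0 ^+ 2 / e * (X + Y).
  by rewrite mulrAC ler_pdivlMr // mulrC.
have c0 : 0 <= ep^-1 + (ed ^+ 2)^-1 by rewrite addr_ge0 // invr_ge0 ?exprn_ge0 // ltW.
have k0 : 0 <= K0 ^+ 2 / e by rewrite mulr_ge0 ?sqr_ge0 // invr_ge0 ltW.
apply: (@le_trans _ _ (X + K0 ^+ 2 / e * (X + Y))).
  by rewrite /X lerD2l.
apply: (@le_trans _ _ ((1 + K0 ^+ 2 / e) * (X + Y))).
  by rewrite mulrDl mul1r lerD2r lerDl.
rewrite -mulrA; apply: ler_wpM2l; first by rewrite addr_ge0.
apply: le_trans hXY _; apply: ler_wpM2l => //.
Qed.

Lemma core_proper (J : nat) (T : {set 'I_J}) (q P M K0 ep e Ab W : R) (s a : 'I_J -> R) :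
  0 <= q -> 0 < ep -> 0 < e -> 0 <= M -> M <= K0 -> q * M ^+ 2 = P ^+ 2 ->
  (forall i, 0 <= s i) -> (forall i, i \in T -> ep * q <= s i) ->
  e <= \sum_(i in T) a i ^+ 2 -> (forall i, `|a i| <= Ab) -> 0 <= W ->
  q * \sum_i (P * a i) ^+ 2 + P ^+ 4 <=
    (J%:R * Ab ^+ 2 + K0 ^+ 2) / (ep * e) * (\sum_i s i * (P * a i) ^+ 2 + W).
Proof.
move=> q0 ep0 e0 M0 MK qM Hs0 Hs He Ha W0.
have P2 : 0 <= P ^+ 2 by exact: sqr_ge0.
set Z := q * P ^+ 2.
have Z0 : 0 <= Z by rewrite mulr_ge0.
have hL : ep * e * Z <= \sum_i s i * (P * a i) ^+ 2 + W.
  apply: (@le_trans _ _ (\sum_i s i * (P * a i) ^+ 2)); last by rewrite lerDl.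
  apply: (@le_trans _ _ (\sum_(i in T) s i * (P * a i) ^+ 2)); last first.
    rewrite [X in _ <= X](bigID (fun i => i \in T)) /= lerDl.
    by apply: sumr_ge0 => i _; rewrite mulr_ge0 ?sqr_ge0.
  apply: (@le_trans _ _ (\sum_(i in T) ep * Z * a i ^+ 2)).
    rewrite -mulr_sumr; have -> : ep * e * Z = ep * Z * e by ring.
    by apply: ler_wpM2l => //; rewrite mulr_ge0 // ltW.
  apply: ler_sum => i iT; rewrite exprMn /Z.
  have -> : ep * (q * P ^+ 2) * a i ^+ 2 = (ep * q) * (P ^+ 2 * a i ^+ 2) by ring.
  by apply: ler_wpM2r; [rewrite mulr_ge0 ?sqr_ge0 | exact: Hs].
have hR : q * \sum_i (P * a i) ^+ 2 + P ^+ 4 <= (J%:R * Ab ^+ 2 + K0 ^+ 2) * Z.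
  rewrite sum_sq_PX mulrDl; apply: lerD.
    rewrite /Z mulrA (mulrC _ Z) /Z; apply: ler_wpM2l => //.
    apply: (@le_trans _ _ (\sum_(i < J) Ab ^+ 2)).
      by apply: ler_sum => i _; exact: sq_le_of_norm.
    by rewrite sumr_const card_ord -[_ *+ J]mulr_natl.
  have -> : P ^+ 4 = (q * M ^+ 2) * P ^+ 2 by rewrite qM; ring.
  have hM : M ^+ 2 <= K0 ^+ 2.
    by rewrite ler_sqr ?nnegrE //; exact: le_trans MK.
  apply: (@le_trans _ _ ((q * K0 ^+ 2) * P ^+ 2)).
    by apply: ler_wpM2r => //; exact: ler_wpM2l.
  by apply: le_of_eq; rewrite /Z; ring.
apply: le_trans hR _.
have epe : 0 < ep * e by exact: mulr_gt0.
rewrite -mulrA; apply: ler_wpM2l; first by rewrite addr_ge0 ?sqr_ge0 // mulr_ge0 ?sqr_ge0.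
by rewrite ler_pdivlMl // mulrA.
Qed.

End Core.


Lemma bigmax0_ge0 (R : realType) (n : nat) (P : pred 'I_n) (F : 'I_n -> R) :
  (forall i, P i -> 0 <= F i) -> 0 <= \big[Num.max/0]_(i < n | P i) F i.
Proof.
move=> H; elim/big_ind: _ => //.
  by move=> x y hx hy; rewrite le_max hx.
Qed.

Theorem lemma4p6 (R : realType) (N J : nat)
  (k0 kinf : R) (iota : 'I_J -> R) (zs : 'I_J -> 'I_N -> R) (c : 'I_J -> R) :
  (7 <= N)%N -> (2 <= J)%N ->
  0 < k0 -> 0 < kinf ->
  (forall i, iota i = 1 \/ iota i = -1) ->
  (forall i j, i != j -> zs i <> zs j) ->
  minimally_degenerate (Amat k0 kinf iota zs) ->
  (forall i, 0 < c i) -> jnorm2 c = 1 ->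
  (forall x : 'I_J -> R,
     (forall i, mulAv (Amat k0 kinf iota zs) x i = 0) <->
     exists t : R, forall i, x i = t * c i) ->
  0 < \sum_(i < J) vnorm2 (fun k : 'I_N =>
        \sum_(j < J) Amat k0 kinf iota zs i j * c i * c j
                     / vnorm2 (vsub (zs i) (zs j)) * (zs j k - zs i k)) ->
  forall K0 delta1 : R, 0 < K0 -> 0 < delta1 ->
  exists delta2 : R, 0 < delta2 /\
  exists C : R, 0 < C /\
  forall (l : 'I_J -> R) (z : 'I_J -> 'I_N -> R),
    (forall i, 0 < l i) ->
    lmax l <= K0 -> delta1 * lmax l <= lmax2 l ->
    cfg_dist z zs < delta2 ->
    let D := Dexp R N in
    let A := Amat k0 kinf iota z in
    let AlD := mulAv A (lpow l D) in
    let LHS :=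
      \sum_(i < J) powR (l i) (2 * D - 2) * AlD i ^+ 2
      + \sum_(i < J) powR (l i) (2 * D) *
          vnorm2 (fun k : 'I_N =>
            \sum_(j < J) A i j * powR (l j) D * (z i k - z j k)
                         / vnorm2 (vsub (z i) (z j))) in
    let RHS := powR (lmax l) (2 * D - 2) * jnorm2 AlD + powR (lmax l) (4 * D) in
    LHS <= C * RHS /\ RHS <= C * LHS.
Proof.
move=> HN HJ k0p kinfp Hiota zd md cpos cnorm Hker Hv K0 d1 K0p d1p.
set As := Amat k0 kinf iota zs.
set Bs := bF k0 kinf iota zs.
have J0 : (0 < J)%N by apply: leq_trans HJ.
have N0 : (0 < N)%N by apply: leq_trans HN.
set jo : 'I_J := Ordinal J0.
set ko : 'I_N := Ordinal N0.
have Jr : 0 < J%:R :> R by rewrite ltr0n.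
have bc := @bc_nonzero R N J k0 kinf iota zs c Hv.
have [e1 e1p He1] : exists2 e : R, 0 < e & forall T : {set 'I_J},
    T \proper [set: 'I_J]%SET -> (2 <= #|T|)%N -> forall v, Kset R J v -> e <= fT As T v.
  have := (@fin_unif R _ (fun (T : {set 'I_J}) (e : R) => T \proper [set: 'I_J]%SET -> (2 <= #|T|)%N ->
                        forall v, Kset R J v -> e <= fT As T v)).
  move=> HH; apply: HH.
    move=> T; case: (boolP (T \proper [set: 'I_J]%SET)) => TP; last first.
      by exists 1 => // /negP.
    case: (boolP (2 <= #|T|)%N) => T2; last by exists 1 => // _ /negP.
    have [e ep He] := lb_compact (@fT_cont R J As T) (@fT_pos R J As T md TP T2).
    by exists e => // _ _.
  move=> T e e' e'p e'e H TP T2 v Kv; exact: le_trans e'e (H TP T2 v Kv).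
have [e0 e0p He0] := lb_compact (@F0_cont R N J k0 kinf iota zs K0)
   (@F0_pos R N J k0 kinf iota zs c K0 K0p Hker bc).
set D := Dexp R N.
have HD1 : 1 <= D.
  have : 7%:R <= N%:R :> R by rewrite ler_nat.
  rewrite /D /Dexp; lra.
have HD0 : 0 <= D by lra.
have HDp : 0 <= 2 * D - 2 by lra.
set al := 1 + \sum_i \sum_j `|As i j|.
set be := 1 + \sum_i \sum_j \sum_k `|Bs i j k|.
have Hal : forall i j, `|As i j| + 1 <= al.
  move=> i j; rewrite /al addrC lerD2l.
  have h1 := @term_le_sum R _ (fun j' => `|As i j'|) j (fun j' => normr_ge0 _).
  apply: le_trans h1 _.
  apply: (@term_le_sum R _ (fun i' => \sum_j' `|As i' j'|) i).
  by move=> i'; apply: sumr_ge0 => j' _; exact: normr_ge0.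
have Hbe : forall i j k, `|Bs i j k| + 1 <= be.
  move=> i j k; rewrite /be addrC lerD2l.
  have h1 := @term_le_sum R _ (fun k' => `|Bs i j k'|) k (fun k' => normr_ge0 _).
  apply: le_trans h1 _.
  have h2 : \sum_k' `|Bs i j k'| <= \sum_j' \sum_k' `|Bs i j' k'|.
    apply: (@term_le_sum R _ (fun j' => \sum_k' `|Bs i j' k'|) j).
    by move=> j'; apply: sumr_ge0 => k' _; exact: normr_ge0.
  apply: le_trans h2 _.
  apply: (@term_le_sum R _ (fun i' => \sum_j' \sum_k' `|Bs i' j' k'|) i).
  by move=> i'; apply: sumr_ge0 => j' _; apply: sumr_ge0 => k' _; exact: normr_ge0.
have alp : 1 <= al by have := Hal jo jo; have := normr_ge0 (As jo jo); lra.
have bep : 1 <= be by have := Hbe jo jo ko; have := normr_ge0 (Bs jo jo ko); lra.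
set Kc := J%:R ^+ 3 * (1 + K0 ^+ 2 * N%:R).
have KN : 0 <= K0 ^+ 2 * N%:R by rewrite mulr_ge0 ?sqr_ge0.
have Kcp : 0 < Kc by apply: mulr_gt0; [exact: exprn_gt0 | lra].
have J3Kc : J%:R ^+ 3 <= Kc.
  rewrite -{1}(mulr1 (J%:R ^+ 3)) /Kc; apply: ler_wpM2l; last by lra.
  by apply: exprn_ge0; exact: ltW.
set eps := Num.min 1 (Num.min e1 e0 / (4 * Kc)).
have epsp : 0 < eps.
  have p4 : 0 < 4 * Kc by apply: mulr_gt0.
  by rewrite /eps lt_min ltr01 /= divr_gt0 // lt_min e1p e0p.
have eps1 : eps <= 1 by rewrite /eps ge_min lexx.
have epsKc : Kc * eps <= Num.min e1 e0 / 4.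
  have : eps <= Num.min e1 e0 / (4 * Kc) by rewrite /eps ge_min lexx orbT.
  have p4 : 0 < 4 * Kc by apply: mulr_gt0.
  rewrite ler_pdivlMr // => h.
  rewrite ler_pdivlMr //; move: h; rewrite (mulrC 4) mulrA (mulrC eps); done.
have epsKc2 : Kc * eps ^+ 2 <= Num.min e1 e0 / 4.
  apply: le_trans epsKc; rewrite ler_pM2l // expr2; apply: ler_piMr => //; exact: ltW.
have me1 : Num.min e1 e0 <= e1 by rewrite ge_min lexx.
have me0 : Num.min e1 e0 <= e0 by rewrite ge_min lexx orbT.
set eta := Num.min d1 (Num.min 1 (eps / al)).
have alp' : 0 < al by lra.
have etap : 0 < eta by rewrite /eta !lt_min d1p ltr01 divr_gt0.
have etad1 : eta <= d1 by rewrite /eta ge_min lexx.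
have eta1 : eta <= 1 by rewrite /eta !ge_min lexx orbT.
have etaal : eta <= eps / al by rewrite /eta !ge_min lexx !orbT.
set etaD := powR eta D.
set etap' := powR eta (2 * D - 2).
have etaDp : 0 < etaD by exact: powR_gt0.
have etap'p : 0 < etap' by exact: powR_gt0.
have etaDle : etaD <= eta by apply: ge1r_powR => //; rewrite etap eta1.
have aletaD : al * etaD <= eps.
  apply: (@le_trans _ _ (al * eta)); first by rewrite ler_pM2l.
  by rewrite mulrC -ler_pdivlMr.

have [d2 d2p Hd2] := near_all k0 kinf iota zd epsp.


exists d2; split => //.
set C1 := 1 + J%:R * N%:R * (J%:R * be) ^+ 2.
set C2 := (1 + K0 ^+ 2 / (e0 / 4)) * (etap'^-1 + (etaD ^+ 2)^-1).
set C3 := (J%:R * (J%:R * al) ^+ 2 + K0 ^+ 2) / (etap' * (e1 / 4)).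
have C1p : 1 <= C1 by rewrite /C1 lerDl mulr_ge0 ?sqr_ge0 // mulr_ge0.
have C2p : 0 <= C2.
  apply: mulr_ge0.
    have : 0 <= K0 ^+ 2 / (e0 / 4) by apply: divr_ge0; [exact: sqr_ge0 | lra].
    lra.
  by apply: addr_ge0; rewrite invr_ge0; [exact: ltW | apply: exprn_ge0; exact: ltW].
have C3p : 0 <= C3.
  apply: divr_ge0; last by apply: mulr_ge0; [exact: ltW | lra].
  apply: addr_ge0; last exact: sqr_ge0.
  by apply: mulr_ge0; [exact: ltW | exact: sqr_ge0].
exists (C1 + C2 + C3); split; first by lra.
move=> l z lpos lK l2 zdist D' A AlD LHS RHS.
rewrite {}/LHS {}/RHS {}/AlD {}/A {}/D'.
set M := lmax l.
have [im _ Him] : {im | im \in xpredT & M = l im}.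
  by apply: (@eq_bigmax _ _ _ 0 jo) => // i _; exact: ltW.
have lle : forall j, l j <= M by move=> j; exact: le_bigmax.
have Mp : 0 < M by rewrite Him.
have [i0 [j0 [ij0 hi0 hj0]]] : exists i0 j0, [/\ i0 != j0, d1 * M <= l i0 & d1 * M <= l j0].
  move: l2; rewrite /lmax2 -/M.
  have [i1 _ ->] : {i1 | i1 \in xpredT & \big[Num.max/0]_(i < J) \big[Num.max/0]_(j < J | j != i)
        Num.min (l i) (l j) = \big[Num.max/0]_(j < J | j != i1) Num.min (l i1) (l j)}.
    apply: (@eq_bigmax _ _ _ 0 jo) => // i _; apply: bigmax0_ge0 => j _.
    by rewrite le_min !ltW.
  have [j1 ji1] : exists j1 : 'I_J, j1 != i1.
    have : (1 < #|[set: 'I_J]%SET|)%N by rewrite cardsT card_ord.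
    case/card_gt1P => a [b [_ _ ab]].
    case: (eqVneq a i1) => [ea|na]; last by exists a.
    by exists b; rewrite -ea eq_sym.
  have mg : forall j, 0 <= Num.min (l i1) (l j) by move=> j; rewrite le_min !ltW.
  have [j2 j2i ->] := @eq_bigmax _ _ _ 0 j1 (fun j => j != i1) (fun j => Num.min (l i1) (l j)) ji1
     (fun j _ => mg j).
  by rewrite le_min => /andP[h1 h2]; exists i1, j2; split => //; rewrite eq_sym.
set P := powR M D.
set q := powR M (2 * D - 2).
set x := fun j => powR (l j / M) D.
have ljM : forall j, 0 <= l j / M by move=> j; rewrite divr_ge0 // ltW.
have hpow : forall j, powR (l j) D = P * x j.
  move=> j; rewrite /P /x -powRM ?(ltW Mp) ?ljM //.
  by rewrite mulrCA mulfV ?gt_eqF // mulr1.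
have hx : forall j, 0 <= x j <= 1.
  move=> j; apply/andP; split; first exact: powR_ge0.
  have h := @ge0_ler_powR R D HD0 (l j / M) 1.
  rewrite powR1 /= in h; apply: h; rewrite ?nnegrE ?ler01 //.
  by rewrite ler_pdivrMr // mul1r.
have hxim : x im = 1 by rewrite /x -Him divff ?gt_eqF // powR1.
have hxT : forall j, eta * M <= l j -> etaD <= x j.
  move=> j hj; rewrite /etaD /x; apply: (@ge0_ler_powR R D HD0).
  - by rewrite nnegrE ltW.
  - by rewrite nnegrE.
  - by rewrite ler_pdivlMr.
have hxnT : forall j, l j < eta * M -> x j <= etaD.
  move=> j hj; rewrite /etaD /x; apply: (@ge0_ler_powR R D HD0).
  - by rewrite nnegrE.
  - by rewrite nnegrE ltW.
  - by rewrite ler_pdivrMr // ltW.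
have hs : forall j, 0 <= powR (l j) (2 * D - 2) <= q.
  move=> j; apply/andP; split; first exact: powR_ge0.
  apply: (@ge0_ler_powR R _ HDp); rewrite ?nnegrE ?(ltW (lpos j)) ?(ltW Mp) //.
have hsT : forall j, eta * M <= l j -> etap' * q <= powR (l j) (2 * D - 2).
  move=> j hj; rewrite /etap' /q -powRM ?(ltW Mp) ?(ltW etap) //.
  apply: (@ge0_ler_powR R _ HDp) => //; rewrite nnegrE ?(ltW (lpos j)) //.
  by rewrite mulr_ge0 // ltW.
have ht : forall j, powR (l j) (2 * D) = (P * x j) ^+ 2.
  by move=> j; rewrite -hpow (mulrC 2) powRrM powR_mulrn // powR_ge0.
have hP4 : powR M (4 * D) = P ^+ 4.
  by rewrite (mulrC 4) powRrM powR_mulrn // powR_ge0.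
have hqM : q * M ^+ 2 = P ^+ 2.
  rewrite -powR_mulrn ?ltW // /q -powRD; last by rewrite (gt_eqF Mp) implybT.
  have -> : 2 * D - 2 + 2%:R = D * 2 by rewrite mulrC; ring.
  by rewrite powRrM powR_mulrn // powR_ge0.
have q0 : 0 <= q by exact: powR_ge0.
have Hz := Hd2 z zdist.
have haz : forall i j, `|Amat k0 kinf iota z i j| <= al.
  move=> i j; have [h _] := Hz i j ko; have := Hal i j.
  have e : Amat k0 kinf iota z i j = As i j + (Amat k0 kinf iota z i j - As i j).
    by rewrite addrC subrK.
  rewrite {1}e => h2; apply: le_trans (ler_normD _ _) _; lra.
have hbz : forall i j k, `|bF k0 kinf iota z i j k| <= be.
  move=> i j k; have [_ h] := Hz i j k; have := Hbe i j k.
  have e : bF k0 kinf iota z i j k = Bs i j k + (bF k0 kinf iota z i j k - Bs i j k).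
    by rewrite addrC subrK.
  rewrite {1}e => h2; apply: le_trans (ler_normD _ _) _; lra.
set ax := fun i => \sum_j Amat k0 kinf iota z i j * x j.
set bx := fun i k => \sum_j bF k0 kinf iota z i j k * x j.
have hxn : forall j, `|x j| <= 1.
  by move=> j; have /andP[h1 h2] := hx j; rewrite ger0_norm.
have hax : forall i, `|ax i| <= J%:R * al.
  move=> i; apply: norm_sum_le => j; rewrite normrM -[al]mulr1.
  by apply: ler_pM => //; exact: haz.
have hbx : forall i k, `|bx i k| <= J%:R * be.
  move=> i k; apply: norm_sum_le => j; rewrite normrM -[be]mulr1.
  by apply: ler_pM => //; exact: hbz.
have eAlD : forall i, mulAv (Amat k0 kinf iota z) (lpow l D) i = P * ax i.
  move=> i; rewrite /mulAv /ax mulr_sumr; apply: eq_bigr => j _.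
  by rewrite /lpow hpow; ring.
have eW : forall i, vnorm2 (fun k : 'I_N =>
            \sum_(j < J) Amat k0 kinf iota z i j * powR (l j) D * (z i k - z j k)
                         / vnorm2 (vsub (z i) (z j))) = \sum_k (P * bx i k) ^+ 2.
  move=> i; rewrite {1}/vnorm2; apply: eq_bigr => k _; congr (_ ^+ 2).
  rewrite /bx mulr_sumr; apply: eq_bigr => j _.
  by rewrite hpow /bF; ring.
set s := fun i => powR (l i) (2 * D - 2).
set LHS' := \sum_i s i * (P * ax i) ^+ 2 + \sum_i (P * x i) ^+ 2 * \sum_k (P * bx i k) ^+ 2.
set RHS' := q * \sum_i (P * ax i) ^+ 2 + P ^+ 4.

match goal with |- is_true (@Order.le _ _ ?E1 (_ * ?E2)) /\ _ =>
  have eL : E1 = LHS'; [|have eR : E2 = RHS'] end.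
- rewrite /LHS'; congr (_ + _); apply: eq_bigr => i _; rewrite ?eAlD //.
  by rewrite ht eW.
- by rewrite /RHS' hP4 /jnorm2; congr (_ * _ + _); apply: eq_bigr => i _; rewrite eAlD.
rewrite eL eR.
have W0 : 0 <= \sum_i (P * x i) ^+ 2 * \sum_k (P * bx i k) ^+ 2.
  by apply: sumr_ge0 => i _; apply: mulr_ge0; [exact: sqr_ge0 | apply: sumr_ge0 => k _; exact: sqr_ge0].
have L0 : 0 <= LHS'.
  apply: addr_ge0 => //; apply: sumr_ge0 => i _; apply: mulr_ge0; last exact: sqr_ge0.
  by have /andP[] := hs i.
have R0 : 0 <= RHS'.
  apply: addr_ge0; last exact: exprn_even_ge0.
  by apply: mulr_ge0 => //; apply: sumr_ge0 => i _; exact: sqr_ge0.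
have UB : LHS' <= C1 * RHS'.
  apply: (@core_ub R J N q P (J%:R * be) s (fun i => (P * x i) ^+ 2) ax bx) => //.
  move=> i; apply/andP; split; first exact: sqr_ge0.
  rewrite exprMn -{2}[P ^+ 2]mulr1; apply: ler_wpM2l; first exact: sqr_ge0.
  by have /andP[h1 h2] := hx i; rewrite expr_le1.
split.
  apply: le_trans UB _; apply: ler_wpM2r => //; lra.
set T := [set i : 'I_J | eta * M <= l i]%SET.
have inT : forall i, (i \in T) = (eta * M <= l i) by move=> i; rewrite /T inE.
have imT : im \in T by rewrite inT -Him ler_piMl // ltW.
have etaM : eta * M <= d1 * M by rewrite ler_wpM2r // ltW.
have i0T : i0 \in T by rewrite inT (le_trans etaM).
have j0T : j0 \in T by rewrite inT (le_trans etaM).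
have Jeps : `|J%:R * eps| = J%:R * eps by rewrite ger0_norm // mulr_ge0 // ltW.
have hJe : J%:R * (J%:R * eps) ^+ 2 <= Kc * eps ^+ 2.
  have -> : J%:R * (J%:R * eps) ^+ 2 = J%:R ^+ 3 * eps ^+ 2 by ring.
  by apply: ler_wpM2r => //; exact: sqr_ge0.
have dA : forall i j, `|(Amat k0 kinf iota z i j - As i j) * x j| <= eps.
  move=> i j; have [h _] := Hz i j ko; rewrite normrM -[eps]mulr1.
  by apply: ler_pM => //; exact: ltW.
case: (eqVneq T [set: 'I_J]%SET) => HT.
  have allT : forall i, eta * M <= l i.
    by move=> i; rewrite -inT HT !inE.
  pose v := \row_j x j.
  have vE : forall j, v ord0 j = x j by move=> j; rewrite mxE.
  have Kv : Kset R J v.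
    apply/KsetP; split; first by move=> i; rewrite vE.
    have y0 : forall j, 0 <= v ord0 j by move=> j; rewrite vE; have /andP[] := hx j.
    apply: le_trans _ (term_le_sum im y0).
    by rewrite vE hxim.
  have h0 := He0 v Kv.
  have eF : F0 k0 kinf iota zs K0 v = \sum_i (\sum_j As i j * x j) ^+ 2
      + K0 ^+ 2 * \sum_i \sum_k (\sum_j Bs i j k * x j) ^+ 2.
    rewrite /F0; congr (_ + _ * _).
      by apply: eq_bigr => i _; congr (_ ^+ 2); apply: eq_bigr => j _; rewrite vE.
    apply: eq_bigr => i _; apply: eq_bigr => k _; congr (_ ^+ 2).
    by apply: eq_bigr => j _; rewrite vE.
  rewrite eF in h0.
  have SA := @sum_pert R _ xpredT ax (fun i => \sum_j As i j * x j) (J%:R * eps)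
    (fun i _ => ltac:(rewrite /ax -sumrB; apply: norm_sum_le => j; rewrite -mulrBl; exact: dA i j)).
  have SB : forall i, \sum_k (\sum_j Bs i j k * x j) ^+ 2 <=
       2 * \sum_k bx i k ^+ 2 + 2 * (N%:R * (J%:R * eps) ^+ 2).
    move=> i; have := @sum_pert R _ xpredT (bx i) (fun k => \sum_j Bs i j k * x j) (J%:R * eps).
    rewrite card_ord; apply => k _; rewrite /bx -sumrB; apply: norm_sum_le => j.
    rewrite -mulrBl normrM -[eps]mulr1; have [_ h] := Hz i j k.
    by apply: ler_pM => //; exact: ltW.
  rewrite card_ord in SA.
  have SB' : \sum_i \sum_k (\sum_j Bs i j k * x j) ^+ 2 <=
       2 * \sum_i \sum_k bx i k ^+ 2 + 2 * (J%:R * (N%:R * (J%:R * eps) ^+ 2)).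
    exact: sum_SB.
  have key : e0 / 4 <= \sum_i ax i ^+ 2 + K0 ^+ 2 * \sum_i \sum_k bx i k ^+ 2.
    have K2 : 0 <= K0 ^+ 2 by exact: sqr_ge0.
    have SB2 := ler_wpM2l K2 SB'.
    have eK : J%:R * (J%:R * eps) ^+ 2 + K0 ^+ 2 * (J%:R * (N%:R * (J%:R * eps) ^+ 2))
        = Kc * eps ^+ 2 by rewrite /Kc; ring.
    move: SB2 eK; rewrite mulrDr.
    set a1 := \sum_i ax i ^+ 2 in SA *.
    set b1 := \sum_i \sum_k bx i k ^+ 2.
    set va := \sum_i (\sum_j As i j * x j) ^+ 2 in SA h0 *.
    set vb := \sum_i \sum_k (\sum_j Bs i j k * x j) ^+ 2 in h0 SB' *.
    set t1 := J%:R * (J%:R * eps) ^+ 2 in SA *.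
    set t2 := J%:R * (N%:R * (J%:R * eps) ^+ 2).
    move=> SB2 eK.
    have : K0 ^+ 2 * (2 * b1) = 2 * (K0 ^+ 2 * b1) by ring.
    have : K0 ^+ 2 * (2 * t2) = 2 * (K0 ^+ 2 * t2) by ring.
    lra.
  have CF := @core_full R J N q P M K0 etap' etaD (e0 / 4) s x ax bx q0 K0p etap'p etaDp
     ltac:(lra) (ltW Mp) lK hqM (fun i => hsT i (allT i)) (fun i => hxT i (allT i)) key.
  apply: le_trans CF _; apply: ler_wpM2r => //.
  have hC : C2 <= C1 + C2 + C3 by lra.
  exact: hC.
have TP : T \proper [set: 'I_J]%SET by rewrite properT.
have T2 : (2 <= #|T|)%N by apply/card_gt1P; exists i0, j0.
pose y := fun j => if j \in T then x j else 0.
pose v := \row_j y j.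
have vE : forall j, v ord0 j = y j by move=> j; rewrite mxE.
have Kv : Kset R J v.
  apply/KsetP; split.
    by move=> i; rewrite vE /y; case: (i \in T) => //; rewrite lexx ler01.
  have y0 : forall j, 0 <= v ord0 j.
    by move=> j; rewrite vE /y; case: (j \in T) => //; have /andP[] := hx j.
  apply: le_trans _ (term_le_sum im y0).
  by rewrite vE /y imT hxim.
have h1 := He1 T TP T2 v Kv.
have eF : fT As T v = \sum_(i in T) (\sum_(j in T) As i j * x j) ^+ 2.
  rewrite /fT; have -> : \sum_(j | j \notin T) v ord0 j ^+ 2 = 0.
    by apply: big1 => j jT; rewrite vE /y (negbTE jT) expr0n.
  rewrite addr0; apply: eq_bigr => i _; congr (_ ^+ 2).
  by apply: eq_bigr => j jT; rewrite vE /y jT.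
rewrite eF in h1.
have SA := @sum_pert R _ (fun i => i \in T) ax (fun i => \sum_(j in T) As i j * x j) (J%:R * eps).
rewrite card_ord in SA.
have SA' : \sum_(i in T) (\sum_(j in T) As i j * x j) ^+ 2 <=
     2 * \sum_(i in T) ax i ^+ 2 + 2 * (J%:R * (J%:R * eps) ^+ 2).
  apply: SA => i _; rewrite /ax (big_mkcond (fun j => j \in T)) /= -sumrB.
  apply: norm_sum_le => j; case: (boolP (j \in T)) => jT.
    by rewrite -mulrBl; exact: dA.
  rewrite subr0 normrM.
  have xj : x j <= etaD by apply: hxnT; rewrite ltNge -inT.
  apply: le_trans aletaD.
  apply: ler_pM; [exact: normr_ge0 | exact: normr_ge0 | exact: haz |].
  by rewrite ger0_norm //; have /andP[] := hx j.
have key : e1 / 4 <= \sum_(i in T) ax i ^+ 2.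
  have : Kc * eps ^+ 2 <= e1 / 4 by apply: le_trans epsKc2 _; rewrite ler_pdivrMr // divfK //; lra.
  lra.
have CP := @core_proper R J T q P M K0 etap' (e1 / 4) (J%:R * al) _ s ax q0 etap'p ltac:(lra)
   (ltW Mp) lK hqM (fun i => ltac:(by have /andP[] := hs i)) (fun i iT => hsT i ltac:(by rewrite -inT))
   key hax W0.
apply: le_trans CP _; apply: ler_wpM2r => //.
have hC : C3 <= C1 + C2 + C3 by lra.
exact: hC.
Qed.
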